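(* Let $R$ be a finite set of nonnegative integers and let $\mathcal{H}$ be a family of hypergraphs each having set of edge types $R$. For each $n$, let $\pi_n(\mathcal{H})$ be the maximum of the Lubell function $h_n(G)$ over all hypergraphs $G$ on $n$ vertices with $R(G)\subseteq R$ which contain no member of $\mathcal{H}$ as a subgraph. Then the limit $\lim_{n\to\infty}\pi_n(\mathcal{H})$ exists.
   Context: A hypergraph $H=(V,E)$ has a finite vertex set $V$ and edge set $E\subseteq 2^V$ (edges may have different sizes). $R(H)=\{|F|: F\in E\}$ is its set of edge types. A hypergraph $H_1$ is a subgraph of $H_2$ if there is an injective map $f\colon V(H_1)\to V(H_2)$ with $f(F)\in E(H_2)$ for every $F\in E(H_1)$. For a hypergraph $G$ on $n$ vertices, the Lubell function is $h_n(G)=\sum_{F\in E(G)} 1/\binom{n}{|F|}$. *)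

(* Defs.v *)
From HB Require Import structures.
From mathcomp Require Import all_boot all_order all_algebra.
From mathcomp Require Import boolp classical_sets reals topology normedtype sequences.
Set Implicit Arguments. Unset Strict Implicit. Unset Printing Implicit Defensive.
Import Order.TTheory GRing.Theory Num.Theory.
Local Open Scope ring_scope.

Definition hgraph (m : nat) := {set {set 'I_m}}.

Definition edge_types (m : nat) (E : hgraph m) : pred nat :=
  fun k => [exists F in E, #|F| == k].

Definition subgraph (m n : nat) (H1 : hgraph m) (H2 : hgraph n) : Prop :=
  exists f : 'I_m -> 'I_n, injective f /\ forall F, F \in H1 -> f @: F \in H2.

Definition lubell (Rt : realType) (n : nat) (G : hgraph n) : Rt :=
  \sum_(F in G) (('C(n, #|F|))%:R)^-1.

Definition hfamily := forall m : nat, hgraph m -> Prop.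

Definition admissible (Rs : seq nat) (Hfam : hfamily) (n : nat) (G : hgraph n) : Prop :=
  (forall F, F \in G -> #|F| \in Rs) /\
  (forall m (H : hgraph m), Hfam m H -> ~ subgraph H G).

(* pi_n(H): maximum of the Lubell function over admissible G on n vertices
   (0 if there is no admissible G; since h_n >= 0, this is the true max
   whenever the set is nonempty). *)
Definition pi_n (Rt : realType) (Rs : seq nat) (Hfam : hfamily) (n : nat) : Rt :=
  \big[Num.max/0]_(G : hgraph n | `[< admissible Rs Hfam G >]) lubell Rt G.

(* Main.v *)
Require Import Defs.
From HB Require Import structures.
From mathcomp Require Import all_boot all_order all_algebra.
From mathcomp Require Import boolp classical_sets reals topology normedtype sequences.
Import numFieldNormedType.Exports.
Import Order.TTheory GRing.Theory Num.Theory.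
Local Open Scope ring_scope.
Local Open Scope classical_set_scope.
Local Open Scope set_scope.

Definition hdel {m : nat} (v : 'I_m.+1) (G : hgraph m.+1) : hgraph m :=
  [set F : {set 'I_m} | (lift v @: F)%SET \in G]%SET.

Lemma lift_preK m (v : 'I_m.+1) (F : {set 'I_m.+1}) :
  v \notin F -> lift v @: (lift v @^-1: F) = F.
Proof.
move=> vF; apply/setP => x; apply/imsetP/idP.
  by case=> y; rewrite inE => Hy ->.
move=> xF; have xv : x != v by apply: contraNneq vF => <-.
case: (unliftP v x) => [y Ex|E]; last by rewrite E eqxx in xv.
by exists y; rewrite // inE -Ex.
Qed.

Lemma lubell_del (Rt : realType) m (v : 'I_m.+1) (G : hgraph m.+1) :
  lubell Rt (hdel v G) =
  \sum_(F : {set 'I_m.+1} | (F \in G) && (v \notin F)) (('C(m, #|F|))%:R)^-1.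
Proof.
rewrite /lubell.
rewrite (reindex_onto (fun F' : {set 'I_m} => lift v @: F')
   (fun F => lift v @^-1: F)); last by move=> F /andP [_ vF]; rewrite lift_preK.
apply: eq_big => F'.
  rewrite inE /=; case: (lift v @: F' \in G) => //=.
  have -> : v \notin lift v @: F'.
    apply/imsetP; case=> y _ E; move: (neq_lift v y); by rewrite -E eqxx.
  rewrite /=; apply/esym/eqP; apply/setP => x.
  by rewrite inE mem_imset //; exact: lift_inj.
by move=> _; rewrite card_imset //; exact: lift_inj.
Qed.

Lemma sum_del (Rt : realType) m (G : hgraph m.+1) :
  (forall F, F \in G -> #|F| <= m)%N ->
  \sum_(v : 'I_m.+1) lubell Rt (hdel v G) = (m.+1)%:R * lubell Rt G.
Proof.
move=> hk.
under eq_bigr => v _ do rewrite lubell_del big_mkcondr.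
rewrite exchange_big /= /lubell mulr_sumr; apply: eq_bigr => F FG.
rewrite -big_mkcond /= sumr_const.
have kF := hk F FG.
have -> : #|[pred v : 'I_m.+1 | v \notin F]| = (m.+1 - #|F|)%N.
  have h := cardC F; rewrite card_ord in h.
  by apply/eqP; rewrite -(eqn_add2l #|F|) h subnKC // leqW.
have a0 : ('C(m, #|F|))%:R != 0 :> Rt by rewrite pnatr_eq0 -lt0n bin_gt0.
have b0 : ('C(m.+1, #|F|))%:R != 0 :> Rt.
  by rewrite pnatr_eq0 -lt0n bin_gt0 ltnW.

apply: (mulIf b0); apply: (mulIf a0); rewrite divfK // -[_^-1 *+ _]mulr_natl mulrAC divfK //.
by rewrite -!natrM; congr (_%:R); rewrite mul_bin_down mulnC.
Qed.

Lemma pi_ge0 (Rt : realType) Rs Hfam n : 0 <= pi_n Rt Rs Hfam n.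
Proof.
rewrite /pi_n; elim/big_ind: _ => //.
  by move=> x y x0 _; rewrite le_max x0.
move=> G _; rewrite /lubell sumr_ge0 // => F _; by rewrite invr_ge0 ler0n.

Qed.

Lemma adm_del Rs Hfam m (v : 'I_m.+1) (G : hgraph m.+1) :
  admissible Rs Hfam G -> admissible Rs Hfam (hdel v G).
Proof.
case=> hR hH; split.
  move=> F; rewrite inE => /hR; rewrite card_imset //; exact: lift_inj.
move=> k H HH [f [finj hf]]; apply: (hH k H HH).
exists (lift v \o f); split.
  by apply: inj_comp => //; exact: lift_inj.
by move=> F FH; rewrite imset_comp; move: (hf F FH); rewrite inE.
Qed.

Lemma pi_mono (Rt : realType) Rs Hfam m :
  (\max_(k <- Rs) k <= m)%N -> pi_n Rt Rs Hfam m.+1 <= pi_n Rt Rs Hfam m.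
Proof.
move=> hN; rewrite /pi_n; apply: bigmax_le; first exact: pi_ge0.
move=> G /asboolP adm.
have hk : forall F, F \in G -> (#|F| <= m)%N.
  move=> F /(proj1 adm) hF; apply: leq_trans hN.
  exact: (@leq_bigmax_seq _ Rs xpredT (fun k => k) _ hF).
have hm : 0 < (m.+1)%:R :> Rt by rewrite ltr0n.
rewrite -(ler_pM2l hm) -(@sum_del Rt m G hk).
apply: le_trans (_ : \sum_(v : 'I_m.+1) pi_n Rt Rs Hfam m <= _).
  apply: ler_sum => v _; rewrite /pi_n.
  apply: le_bigmax_cond.
  by apply/asboolP; apply: adm_del.
by rewrite sumr_const card_ord mulr_natl.
Qed.

Theorem mainTheorem1 (Rt : realType) (Rs : seq nat) (Hfam : hfamily) :
  (forall m (H : hgraph m), Hfam m H -> forall k, (k \in Rs) = edge_types H k) ->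
  exists l : Rt, (pi_n Rt Rs Hfam n) @[n --> \oo] --> l.
Proof.
move=> _.
set N := (\max_(k <- Rs) k)%N.
set u := fun n => pi_n Rt Rs Hfam (n + N).
have hu : cvgn u.
  apply: nonincreasing_is_cvgn.
    apply/nonincreasing_seqP => n; rewrite /u addSn; apply: pi_mono.
    exact: leq_addl.
  by exists 0 => _ [n _ <-]; exact: pi_ge0.
exists (limn u).
rewrite -(cvg_shiftn N); exact: hu.
Qed.
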